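(* Let $D$ be the automaton built from complete DFAs $A,B,C$ as described in the context, let $i$ be a state of $A$, and let $S,S'\subseteq Q_B\times Q_C$ be tableaux with $S\rightarrow S'$. Then the states $(i,S)$ and $(i,S')$ of $D$ are equivalent, i.e. for every $w\in\Sigma^*$, $(i,S)\cdot w\in F_D$ iff $(i,S')\cdot w\in F_D$.
   Context: Let $A=(\Sigma,Q_A=\{0,\dots,m-1\},0,F_A,\cdot)$, $B=(\Sigma,Q_B=\{q_0,\dots,q_{n-1}\},q_0,F_B,\cdot)$, $C=(\Sigma,Q_C=\{r_0,\dots,r_{p-1}\},r_0,F_C,\cdot)$ be complete DFAs. $D=(\Sigma,Q_A\times 2^{Q_B\times Q_C},i_D,F_D,\cdot)$ where $i_D=(0,\emptyset)$ if $0\notin F_A$ and $i_D=(0,\{(q_0,r_0)\})$ otherwise; $(i,S)\in F_D$ iff $S$ contains a pair $(q,r)$ with exactly one of $q\in F_B$, $r\in F_C$; and for $a\in\Sigma$, $(i,S)\cdot a=(i\cdot a,S\cdot a)$ if $i\cdot a\notin F_A$ and $(i\cdot a,S\cdot a\cup\{(q_0,r_0)\})$ otherwise, with $S\cdot a=\{(q\cdot a,r\cdot a):(q,r)\in S\}$; this extends to words. A tableau is a subset of $Q_B\times Q_C$. Write $S\rightarrow S'$ if $S'=S\cup\{(q_y,r_{x'})\}$ where $(q_y,r_{x'})\notin S$ and $(q_x,r_{x'}),(q_x,r_{y'}),(q_y,r_{y'})\in S$ for some $q_x\neq q_y$, $r_{x'}\neq r_{y'}$ (i.e. $S'$ completes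 a right triangle of $S$ into a rectangle). *)

(* Defs.v *)
From mathcomp Require Import all_boot.
Set Implicit Arguments. Unset Strict Implicit. Unset Printing Implicit Defensive.

Record dfa (Sigma : finType) := DFA {
  dstate : finType;
  dstart : dstate;
  dfinal : {set dstate};
  dtrans : dstate -> Sigma -> dstate }.

Section D.
Variables (Sigma : finType) (A B C : dfa Sigma).

Definition tableau := {set (dstate B * dstate C)}.

Definition tab_step (S : tableau) (a : Sigma) : tableau :=
  [set (dtrans p.1 a, dtrans p.2 a) | p in S].

Definition D_state := (dstate A * tableau)%type.

Definition D_start : D_state :=
  if dstart A \in dfinal A then (dstart A, [set (dstart B, dstart C)])
  else (dstart A, set0).

Definition D_final (x : D_state) : bool :=
  [exists p in x.2, (p.1 \in dfinal B) != (p.2 \in dfinal C)].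

Definition D_trans (x : D_state) (a : Sigma) : D_state :=
  let i' := dtrans x.1 a in
  if i' \in dfinal A then (i', (dstart B, dstart C) |: tab_step x.2 a)
  else (i', tab_step x.2 a).

Definition D_run (x : D_state) (w : seq Sigma) : D_state := foldl D_trans x w.

(* S -> S' : S' completes a right triangle of S into a rectangle *)
Definition tab_arrow (S S' : tableau) : Prop :=
  exists (qx qy : dstate B) (rx ry : dstate C),
    [/\ qx != qy, rx != ry, (qy, rx) \notin S,
        [&& (qx, rx) \in S, (qx, ry) \in S & (qy, ry) \in S] &
        S' = (qy, rx) |: S].
End D.

(* Main.v *)
Require Import Defs.
From mathcomp Require Import all_boot.

Section Aux.
Variables (Sigma : finType) (A B C : dfa Sigma).

Definition Rt (T T' : tableau B C) : Prop :=
  exists a b c d, T' = (a, b) |: T /\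
    [/\ (c, b) \in T, (c, d) \in T & (a, d) \in T].

Lemma Rt_step (T T' : tableau B C) (s : Sigma) :
  Rt T T' -> Rt (tab_step T s) (tab_step T' s).
Proof.
move=> [a [b [c [d [-> [h1 h2 h3]]]]]].
exists (dtrans a s), (dtrans b s), (dtrans c s), (dtrans d s); split.
  by rewrite /tab_step imsetU imset_set1.
split; apply/imsetP.
- by exists (c, b).
- by exists (c, d).
- by exists (a, d).
Qed.

Lemma Rt_add (T T' : tableau B C) p :
  Rt T T' -> Rt (p |: T) (p |: T').
Proof.
move=> [a [b [c [d [-> [h1 h2 h3]]]]]].
exists a, b, c, d; split; first by rewrite setUCA.
by split; rewrite in_setU ?h1 ?h2 ?h3 orbT.
Qed.

Lemma Rt_final x (T T' : tableau B C) :
  Rt T T' -> D_final (A:=A) (x, T) = D_final (A:=A) (x, T').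
Proof.
move=> [a [b [c [d [-> [h1 h2 h3]]]]]].
rewrite /D_final /=.
apply/idP/idP; case/existsP => p /andP [Hp Hx]; apply/existsP.
  by exists p; rewrite in_setU Hp orbT.
move: Hp Hx; rewrite in_setU => /orP [/set1P ->|Hp Hx]; last by exists p; rewrite Hp.
move=> /=.
case Ea: (a \in dfinal B); case Eb: (b \in dfinal C);
case Ec: (c \in dfinal B); case Ed: (d \in dfinal C) => //= _.
all: first [ by exists (c, b); rewrite h1 /= Ec Eb
           | by exists (c, d); rewrite h2 /= Ec Ed
           | by exists (a, d); rewrite h3 /= Ea Ed ].
Qed.

Lemma Rt_run w : forall x (T T' : tableau B C), Rt T T' ->
  exists y U U', [/\ D_run (A:=A) (x, T) w = (y, U),
                     D_run (A:=A) (x, T') w = (y, U') & Rt U U'].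
Proof.
elim: w => [|s w IH] x T T' H /=; first by exists x, T, T'.
rewrite /D_trans /=.
case: (dtrans x s \in dfinal A); apply: IH.
  by apply: Rt_add; apply: Rt_step.
by apply: Rt_step.
Qed.
End Aux.

Theorem lemma4 (Sigma : finType) (A B C : dfa Sigma)
  (i : dstate A) (S S' : tableau B C) :
  tab_arrow S S' ->
  forall w : seq Sigma,
    D_final (D_run (A:=A) (B:=B) (C:=C) (i, S) w) = D_final (D_run (A:=A) (B:=B) (C:=C) (i, S') w).
Proof.
move=> [qx [qy [rx [ry [_ _ _ /and3P [h1 h2 h3] ->]]]]] w.
have H : @Rt _ B C S ((qy, rx) |: S) by exists qy, rx, qx, ry.
have [y [U [U' [-> -> HU]]]] := @Rt_run _ A B C w i _ _ H.
exact: Rt_final.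
Qed.
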